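(* Let $a,b$ be positive integers and $c$ an integer with $-b<c<a$, let $d=\gcd(a,b,c)$, $a'=a/d$, $b'=b/d$, $c'=c/d$, $d'=\gcd(a',b')$, and let $k\in\mathbb{N}\cup\{\infty\}$ with $k\geq d'-1$. If $S$ is a basis (generating set as a $T_{\mathbb{Z}}$-ideal) for $T_{\mathbb{Z}}(E_{(-b',c',a')}^{(\infty,k,\infty)})$, then the $T_{\mathbb{Z}}$-ideal $T_{\mathbb{Z}}(E_{(-b,c,a)}^{(\infty,k,\infty)})$ is generated by $S'\cup N$, where $S'=\{\Psi_d(\Phi_d(f)) : f\in S\}$ and $N=\{x_i^m\in X: m\notin d\mathbb{Z}\}$.
   Context: $F$ is a field of characteristic zero; $E$ is the Grassmann algebra of an infinite-dimensional $F$-vector space with basis $e_1,e_2,\dots$. For pairwise distinct integers $r_1,\dots,r_n$ and $v_j\in\mathbb{N}\cup\{\infty\}$, $E_{(r_1,\dots,r_n)}^{(v_1,\dots,v_n)}$ is the $\mathbb{Z}$-grading obtained by splitting $\{e_i\}$ into $n$ disjoint sets of cardinalities $v_1,\dots,v_n$, giving elements of the $j$-th set degree $r_j$ and monomials the sum of degrees. For a group $G$, $F\langle X|G\rangle$ is the free associative algebra on variables $x_i^g$ of degree $g$; $X$ is the set of variables; $T_G(A)$ is the ideal of graded identities of a $G$-graded algebra $A$; a $T_G$-ideal is an ideal invariant under degree-preserving endomorphisms. $\Phi_d:F\langle X|\mathbb{Z}\rangle\to F\langle X|d\mathbb{Z}\rangle$ is the isomorphism $x_i^n\mapsto x_i^{dn}$,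 and $\Psi_d:F\langle X|d\mathbb{Z}\rangle\to F\langle X|\mathbb{Z}\rangle$ is the homomorphism $x_i^{dn}\mapsto x_i^{dn}$. *)

(* Defs.v *)
From HB Require Import structures.
From mathcomp Require Import all_boot all_order all_algebra.
From mathcomp Require Import finmap freeg.
Set Implicit Arguments. Unset Strict Implicit. Unset Printing Implicit Defensive.
Import Order.TTheory GRing.Theory Num.Theory.
Local Open Scope ring_scope.
Local Open Scope fset_scope.

Section Defs.
Variable F : fieldType.

(* E = free F-module on the finite subsets S of nat; the basis vector
   e_S stands for e_{s_1} e_{s_2} ... e_{s_k}, s_1 < ... < s_k.
   (The generators e_0, e_1, e_2, ... form a countably infinite basis
   of the underlying vector space.) *)
Definition GE := {freeg {fset nat} / F}.

Definition ginv (S T : {fset nat}) : nat :=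
  \sum_(s <- enum_fset S) \sum_(t <- enum_fset T) (t < s)%N.

Definition gmono (S T : {fset nat}) : GE :=
  if S `&` T == fset0 then (-1) ^+ ginv S T *: << S `|` T >> else 0.

Definition gmul (x y : GE) : GE :=
  fglift (fun S => fglift (fun T => gmono S T) y) x.

Definition gone : GE := << (fset0 : {fset nat}) >>.

(* A Z-grading of E of the form E^{(v_1,..,v_n)}_{(r_1,..,r_n)} is encoded by
   the degree function deg : nat -> int of the generators e_i;
   the degree of the monomial e_S is the sum of the degrees. *)
Definition gdegS (deg : nat -> int) (S : {fset nat}) : int :=
  \sum_(i <- enum_fset S) deg i.

Definition ghomog (deg : nat -> int) (g : int) (x : GE) : bool :=
  all (fun S => gdegS deg S == g) (dom x).

(* cardinality in N u {oo} (None = infinity) of {i | P i} *)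
Definition has_card (P : nat -> Prop) (v : option nat) : Prop :=
  match v with
  | Some k => exists s : seq nat, [/\ uniq s, size s = k & forall i, P i <-> i \in s]
  | None => forall N : nat, exists i : nat, (N <= i)%N /\ P i
  end.

(* deg realizes the grading E^{(v1,v2,v3)}_{(r1,r2,r3)} *)
Definition is_grading3 (r1 r2 r3 : int) (v1 v2 v3 : option nat)
    (deg : nat -> int) : Prop :=
  [/\ forall i, deg i = r1 \/ deg i = r2 \/ deg i = r3,
      has_card (fun i => deg i = r1) v1,
      has_card (fun i => deg i = r2) v2 &
      has_card (fun i => deg i = r3) v3].

(* words in the variables x_i^g, encoded as (i, g) *)
Definition word (G : choiceType) := seq (nat * G).
Definition FA (G : choiceType) := {freeg (word G) / F}.

Definition famul (G : choiceType) (p q : FA G) : FA G :=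
  fglift (fun u => fglift (fun v => << (u ++ v : word G) >>) q) p.

Definition faone (G : choiceType) : FA G := << ([::] : word G) >>.

Definition favar (G : choiceType) (i : nat) (g : G) : FA G :=
  << ([:: (i, g)] : word G) >>.

Definition wdeg (w : word int) : int := \sum_(x <- w) x.2.

Definition fahomog (g : int) (p : FA int) : bool :=
  all (fun w => wdeg w == g) (dom p).

Definition fasubst (sigma : nat -> int -> FA int) (p : FA int) : FA int :=
  fglift (fun w => foldr (fun x acc => famul (sigma x.1 x.2) acc)
                         (faone int) w) p.

Definition graded_endo (sigma : nat -> int -> FA int) : Prop :=
  forall i g, fahomog g (sigma i g).

Definition is_TZideal (I : FA int -> Prop) : Prop :=
  [/\ I 0%R,
      forall p q, I p -> I q -> I (p + q)%R,
      forall (c : F) p, I p -> I (c *: p),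
      forall p h, I p -> I (famul h p) /\ I (famul p h) &
      forall sigma p, graded_endo sigma -> I p -> I (fasubst sigma p)].

Definition TZgen (S : FA int -> Prop) (f : FA int) : Prop :=
  forall I, is_TZideal I -> (forall g, S g -> I g) -> I f.

Definition evalE (a : nat -> int -> GE) (p : FA int) : GE :=
  fglift (fun w => foldr (fun x acc => gmul (a x.1 x.2) acc) gone w) p.

Definition TZ_E (deg : nat -> int) (f : FA int) : Prop :=
  forall a : nat -> int -> GE, (forall i g, ghomog deg g (a i g)) ->
    evalE a f = 0%R.

Definition dZ (d : int) := {z : int | (d %| z)%Z}.

Definition to_dZ (d n : int) : dZ d := exist _ (d * n) (dvdz_mulr n (dvdzz d)).

Definition Phi (d : int) (f : FA int) : FA (dZ d) :=
  fglift (fun w => << ([seq (x.1, to_dZ d x.2) | x <- w] : word (dZ d)) >>) f.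

Definition Psi (d : int) (f : FA (dZ d)) : FA int :=
  fglift (fun w => << ([seq (x.1, val x.2) | x <- w] : word int) >>) f.

End Defs.

Arguments Phi {F} d f.
Arguments Psi {F} d f.
Arguments favar {F G} i g.
Arguments TZ_E {F} deg f.

(* Main.v *)
Require Import Defs.
From HB Require Import structures.
From mathcomp Require Import all_boot all_order all_algebra.
From mathcomp Require Import finmap freeg.
From mathcomp Require Import zify.
Import Order.TTheory GRing.Theory Num.Theory.
Local Open Scope fset_scope.
Local Open Scope ring_scope.
Set Implicit Arguments. Unset Strict Implicit. Unset Printing Implicit Defensive.

Section Gen.
Variable R : ringType.
Variable K : choiceType.
Variable M : lmodType R.

Lemma fgl_add (f : K -> M) : additive (fglift f).
Proof. exact: lift_is_additive. Qed.

HB.instance Definition _ (f : K -> M) :=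
  GRing.isAdditive.Build {freeg K / R} M (fglift f) (fgl_add f).

Lemma freegUZ (k : R) (x : K) : << k *g x >> = k *: << x >>.
Proof.
apply/eqP/freeg_eqP => y; by rewrite coeffZ !coeffU mul1r.
Qed.

Lemma fgl_ind (P : {freeg K / R} -> Prop) :
  P 0 -> (forall k x D, P D -> P (k *: << x >> + D)) -> forall D, P D.
Proof.
move=> H0 HS; apply: freeg_ind_dom0 => // k x D _ _ HD.
by rewrite freegUZ; apply: HS.
Qed.

Lemma fglU (f : K -> M) x : fglift f << x >> = f x.
Proof. by rewrite liftU scale1r. Qed.

Lemma fglZ (f : K -> M) (c : R) D : fglift f (c *: D) = c *: fglift f D.
Proof.
elim/fgl_ind: D => [|k x D IH].
  by rewrite (_ : c *: (0 : {freeg K / R}) = 0) ?scaler0 // raddf0 scaler0.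
rewrite scalerDr !raddfD /= IH scalerA -!freegUZ !liftU scalerA.
by [].
Qed.

End Gen.
Lemma perm_fsetU (S T : {fset nat}) : S `&` T == fset0 ->
  perm_eq (enum_fset (S `|` T)) (enum_fset S ++ enum_fset T).
Proof.
move=> /eqP dST; apply: uniq_perm; first exact: fset_uniq.
  rewrite cat_uniq !fset_uniq /= andbT; apply/hasPn => x xT.
  apply/negP => xS; have : x \in S `&` T by rewrite in_fsetI xS.
  by rewrite dST.
by move=> x; rewrite mem_cat in_fsetU.
Qed.

Lemma ginvUl (S T U : {fset nat}) : S `&` T == fset0 ->
  ginv (S `|` T) U = (ginv S U + ginv T U)%N.
Proof. by move=> d; rewrite /ginv (perm_big _ (perm_fsetU d)) big_cat. Qed.

Lemma ginvUr (S T U : {fset nat}) : T `&` U == fset0 ->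
  ginv S (T `|` U) = (ginv S T + ginv S U)%N.
Proof.
move=> d; rewrite /ginv -big_split /=; apply: eq_bigr => s _.
by rewrite (perm_big _ (perm_fsetU d)) big_cat.
Qed.

Lemma fsetU_eq0' (A B : {fset nat}) :
  (A `|` B == fset0) = (A == fset0) && (B == fset0).
Proof.
apply/idP/andP => [/eqP H|[/eqP -> /eqP ->]]; last by rewrite fsetU0.
split; apply/eqP/fsetP => x; rewrite in_fset0; apply/negP => xA;
  have : x \in A `|` B by rewrite in_fsetU xA ?orbT.
all: by rewrite H.
Qed.

Lemma disUr (S T U : {fset nat}) :
  (S `&` (T `|` U) == fset0) = (S `&` T == fset0) && (S `&` U == fset0).
Proof. by rewrite fsetIUr fsetU_eq0'. Qed.

Lemma disUl (S T U : {fset nat}) :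
  ((S `|` T) `&` U == fset0) = (S `&` U == fset0) && (T `&` U == fset0).
Proof. by rewrite fsetIUl fsetU_eq0'. Qed.

Section Grass.
Variable F : fieldType.
Local Notation GE := (GE F).
Local Notation gmul := (@gmul F).
Local Notation gmono := (@gmono F).
Local Notation gone := (@gone F).

Lemma gmulDl z : {morph gmul^~ z : x y / x + y}.
Proof. by move=> x y; rewrite /gmul raddfD. Qed.
Lemma gmul0l z : gmul 0 z = 0.
Proof. by rewrite /gmul raddf0. Qed.
Lemma gmulZl c x z : gmul (c *: x) z = c *: gmul x z.
Proof. by rewrite /gmul fglZ. Qed.
Lemma gmulUl S z : gmul << S >> z = fglift (gmono S) z.
Proof. by rewrite /gmul fglU. Qed.

Lemma gmulDr x : {morph gmul x : y z / y + z}.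
Proof.
move=> y z; elim/fgl_ind: x => [|k S D IH]; first by rewrite !gmul0l addr0.
by rewrite !gmulDl !gmulZl !gmulUl IH !raddfD /= ?scalerDr addrACA.
Qed.
Lemma gmul0r x : gmul x 0 = 0.
Proof.
elim/fgl_ind: x => [|k S D IH]; first by rewrite !gmul0l.
by rewrite !gmulDl !gmulZl !gmulUl IH raddf0 scaler0 addr0.
Qed.
Lemma gmulZr c x y : gmul x (c *: y) = c *: gmul x y.
Proof.
elim/fgl_ind: x => [|k S D IH]; first by rewrite !gmul0l scaler0.
rewrite !gmulDl !gmulZl !gmulUl IH fglZ scalerDr !scalerA.
by rewrite (mulrC k c).
Qed.
Lemma gmulUU S T : gmul << S >> << T >> = gmono S T.
Proof. by rewrite gmulUl fglU. Qed.

Lemma gmono_assoc S T U :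
  gmul (gmono S T) << U >> = gmul << S >> (gmono T U).
Proof.
rewrite /gmono.
have [dST|dST] := boolP (S `&` T == fset0); last first.
  rewrite gmul0l; case: ifP => dTU; last by rewrite gmul0r.
  rewrite gmulZr gmulUU /gmono disUr (negbTE dST) /=.
  by rewrite scaler0.
rewrite gmulZl gmulUU /gmono disUl /=.
have [dTU|dTU] := boolP (T `&` U == fset0); last first.
  by rewrite gmul0r andbF scaler0.
rewrite gmulZr gmulUU /gmono disUr dST /= andbT.
case: ifP => dSU; last by rewrite !scaler0.
rewrite !scalerA fsetUA ginvUl // ginvUr // !exprD.
congr (_ *: _); rewrite !mulrA.
by rewrite mulrC mulrA.
Qed.

Lemma gmulA x y z : gmul (gmul x y) z = gmul x (gmul y z).
Proof.
elim/fgl_ind: x => [|k S D IH]; first by rewrite !gmul0l.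
rewrite !gmulDl !gmulZl IH; congr (_ *: _ + _); clear IH D.
elim/fgl_ind: y => [|k' T D' IH']; first by rewrite !gmul0l !gmul0r gmul0l.
rewrite !gmulDr !gmulDl !gmulZr !gmulZl IH'.
rewrite gmulDr gmulZr; congr (_ *: _ + _); clear IH' D'; rewrite gmulUU.
elim/fgl_ind: z => [|k'' U D'' IH'']; first by rewrite !gmul0r.
by rewrite !gmulDr !gmulZr IH'' gmono_assoc gmulUU.
Qed.

Lemma ginv0l T : ginv fset0 T = 0%N.
Proof. by rewrite /ginv (_ : enum_fset fset0 = [::]) // big_nil. Qed.
Lemma ginv0r S : ginv S fset0 = 0%N.
Proof. by rewrite /ginv big1 // => s _; rewrite (_ : enum_fset fset0 = [::]) // big_nil. Qed.

Lemma gmul1l x : gmul gone x = x.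
Proof.
rewrite /gone gmulUl.
elim/fgl_ind: x => [|k T D IH]; first by rewrite raddf0.
rewrite raddfD /= fglZ fglU IH /gmono fset0I eqxx ginv0l fset0U.
by rewrite expr0 scale1r.
Qed.

Lemma gmul1r x : gmul x gone = x.
Proof.
elim/fgl_ind: x => [|k S D IH]; first by rewrite gmul0l.
rewrite gmulDl gmulZl IH gmulUU /gmono fsetI0 eqxx ginv0r fsetU0.
by rewrite expr0 scale1r.
Qed.

End Grass.

Section Homog.
Variable R : ringType.
Variable K : choiceType.
Variable wt : K -> int.

Definition homog (g : int) (x : {freeg K / R}) := all (fun S => wt S == g) (dom x).
Definition proj (g : int) (x : {freeg K / R}) : {freeg K / R} :=
  fglift (fun S => (wt S == g)%:R *: << S >>) x.

Lemma coeff_proj g x T : coeff T (proj g x) = (wt T == g)%:R * coeff T x.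
Proof.
elim/fgl_ind: x => [|k S D IH]; first by rewrite /proj !raddf0 mulr0.
rewrite /proj raddfD /= fglZ fglU -/(proj g D) !coeffD IH !coeffZ !coeffU.
rewrite !mul1r mulrDr; congr (_ + _).
by have [->|ne] := eqVneq S T; rewrite ?eqxx ?(negbTE ne) /= ?mulr1 ?mulr0 // mulr_natr mulr_natl.
Qed.

Lemma homogP g x : homog g x <-> proj g x = x.
Proof.
split.
  move=> /allP H; apply/eqP/freeg_eqP => T; rewrite coeff_proj.
  case: (boolP (T \in dom x)) => [/H /= ->|/coeff_outdom ->]; last by rewrite mulr0.
  by rewrite mul1r.
move=> E; apply/allP => T; rewrite mem_dom => nz.
move: nz; rewrite -{1}E coeff_proj; case: (wt T == g) => //.
by rewrite mul0r eqxx.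
Qed.

Lemma projD g : {morph proj g : x y / x + y}.
Proof. by move=> x y; rewrite /proj raddfD. Qed.
Lemma projZ g c x : proj g (c *: x) = c *: proj g x.
Proof. by rewrite /proj fglZ. Qed.
Lemma proj0 g : proj g 0 = 0.
Proof. by rewrite /proj raddf0. Qed.
Lemma projU g S : proj g << S >> = (wt S == g)%:R *: << S >>.
Proof. by rewrite /proj fglU. Qed.

Lemma homog0 g : homog g 0.
Proof. by apply/homogP; rewrite proj0. Qed.
Lemma homogD g x y : homog g x -> homog g y -> homog g (x + y).
Proof. by move=> /homogP hx /homogP hy; apply/homogP; rewrite projD hx hy. Qed.
Lemma homogZ g c x : homog g x -> homog g (c *: x).
Proof. by move=> /homogP hx; apply/homogP; rewrite projZ hx. Qed.
Lemma homog_proj g x : homog g (proj g x).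
Proof.
apply/homogP; elim/fgl_ind: x => [|k S D IH]; first by rewrite !proj0.
rewrite !projD !projZ IH !projU projZ projU scalerA.
by case: (wt S == g); rewrite /= ?mulr1 ?scaler0 ?scale0r ?scaler0.
Qed.
Lemma homogU g S : wt S = g -> homog g << S >>.
Proof. by move=> h; apply/homogP; rewrite projU h eqxx scale1r. Qed.

End Homog.

Lemma gdegS_U (deg : nat -> int) (S T : {fset nat}) : S `&` T == fset0 ->
  gdegS deg (S `|` T) = gdegS deg S + gdegS deg T.
Proof. by move=> d; rewrite /gdegS (perm_big _ (perm_fsetU d)) big_cat. Qed.

Lemma gdegS0 (deg : nat -> int) : gdegS deg fset0 = 0.
Proof. by rewrite /gdegS (_ : enum_fset fset0 = [::]) // big_nil. Qed.

Section Eval.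
Variable F : fieldType.
Local Notation GE := (GE F).
Local Notation gmul := (@gmul F).
Local Notation gmono := (@gmono F).
Local Notation gone := (@gone F).

Lemma ghomogE deg g (x : GE) : ghomog deg g x = homog (gdegS deg) g x.
Proof. by []. Qed.

Lemma ghomog_mul deg g h (x y : GE) :
  ghomog deg g x -> ghomog deg h y -> ghomog deg (g + h) (gmul x y).
Proof.
rewrite !ghomogE => /homogP <- /homogP <-.
elim/fgl_ind: x => [|k S D IH]; first by rewrite proj0 gmul0l homog0.
rewrite projD gmulDl; apply: homogD => //; rewrite projZ gmulZl; apply: homogZ.
clear IH D; rewrite projU gmulZl.
case: eqP => [eS|_]; last by rewrite scale0r homog0.
apply: homogZ.
elim/fgl_ind: y => [|k' T D IH]; first by rewrite proj0 gmul0r homog0.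
rewrite projD gmulDr; apply: homogD => //; rewrite projZ gmulZr; apply: homogZ.
rewrite projU gmulZr.
case: eqP => [eT|_]; last by rewrite scale0r homog0.
apply: homogZ; rewrite gmulUU /gmono.
case: ifP => dST; last exact: homog0.
apply: homogZ; apply: homogU.
by rewrite gdegS_U // eS eT.
Qed.

Lemma gone_homog deg : ghomog deg 0 gone.
Proof. by rewrite ghomogE; apply: homogU; rewrite gdegS0. Qed.

Lemma evalE_U (a : nat -> int -> GE) w :
  evalE a (<< w >> : FA F int) = foldr (fun x acc => gmul (a x.1 x.2) acc) gone w.
Proof. by rewrite /evalE fglU. Qed.

Lemma evalED (a : nat -> int -> GE) : {morph evalE a : p q / p + q}.
Proof. by move=> p q; rewrite /evalE raddfD. Qed.
Lemma evalE0 (a : nat -> int -> GE) : evalE a 0 = 0.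
Proof. by rewrite /evalE raddf0. Qed.
Lemma evalEZ (a : nat -> int -> GE) c (p : FA F int) : evalE a (c *: p) = c *: evalE a p.
Proof. by rewrite /evalE fglZ. Qed.

Lemma foldr_cat_g (a : nat -> int -> GE) (u v : word int) :
  foldr (fun x acc => gmul (a x.1 x.2) acc) gone (u ++ v) =
  gmul (foldr (fun x acc => gmul (a x.1 x.2) acc) gone u)
       (foldr (fun x acc => gmul (a x.1 x.2) acc) gone v).
Proof.
elim: u => [|x u IH] /=; first by rewrite gmul1l.
by rewrite IH gmulA.
Qed.

End Eval.

Section FAlg.
Variable F : fieldType.
Variable G : choiceType.
Local Notation FA := (FA F G).
Local Notation famul := (@famul F G).

Lemma famulDl z : {morph famul^~ z : x y / x + y}.
Proof. by move=> x y; rewrite /famul raddfD. Qed.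
Lemma famul0l z : famul 0 z = 0.
Proof. by rewrite /famul raddf0. Qed.
Lemma famulZl c x z : famul (c *: x) z = c *: famul x z.
Proof. by rewrite /famul fglZ. Qed.
Lemma famulUl u z : famul << u >> z = fglift (fun v => << (u ++ v : word G) >>) z.
Proof. by rewrite /famul fglU. Qed.
Lemma famulDr x : {morph famul x : y z / y + z}.
Proof.
move=> y z; elim/fgl_ind: x => [|k S D IH]; first by rewrite !famul0l addr0.
by rewrite !famulDl !famulZl !famulUl IH !raddfD /= ?scalerDr addrACA.
Qed.
Lemma famul0r x : famul x 0 = 0.
Proof.
elim/fgl_ind: x => [|k S D IH]; first by rewrite !famul0l.
by rewrite !famulDl !famulZl !famulUl IH raddf0 scaler0 addr0.
Qed.
Lemma famulZr c x y : famul x (c *: y) = c *: famul x y.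
Proof.
elim/fgl_ind: x => [|k S D IH]; first by rewrite !famul0l scaler0.
rewrite !famulDl !famulZl !famulUl IH fglZ scalerDr !scalerA.
by rewrite (mulrC k c).
Qed.
Lemma famulUU u v : famul << u >> << v >> = << (u ++ v : word G) >>.
Proof. by rewrite famulUl fglU. Qed.

End FAlg.

Section Eval2.
Variable F : fieldType.
Local Notation GE := (GE F).
Local Notation gmul := (@gmul F).
Local Notation gone := (@gone F).

Lemma evalE_mul (a : nat -> int -> GE) p q :
  evalE a (famul p q) = gmul (evalE a p) (evalE a q).
Proof.
elim/fgl_ind: p => [|k u D IH]; first by rewrite famul0l evalE0 gmul0l.
rewrite famulDl famulZl evalED evalEZ IH evalED evalEZ gmulDl gmulZl.
congr (_ *: _ + _); clear IH D.
elim/fgl_ind: q => [|k' v D IH]; first by rewrite famul0r evalE0 gmul0r.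
rewrite famulDr famulZr evalED evalEZ IH evalED evalEZ gmulDr gmulZr.
by rewrite famulUU !evalE_U foldr_cat_g.
Qed.

Lemma evalE_one (a : nat -> int -> GE) : evalE a (faone F int) = gone.
Proof. by rewrite /faone evalE_U. Qed.

Lemma evalE_var (a : nat -> int -> GE) i g : evalE a (favar i g) = a i g.
Proof. by rewrite /favar evalE_U /= gmul1r. Qed.

Lemma evalE_subst (a : nat -> int -> GE) sigma p :
  evalE a (fasubst sigma p) = evalE (fun i g => evalE a (sigma i g)) p.
Proof.
elim/fgl_ind: p => [|k w D IH]; first by rewrite /fasubst raddf0 !evalE0.
rewrite /fasubst raddfD /= fglZ -/(fasubst sigma D) evalED evalEZ IH.
rewrite evalED evalEZ fglU evalE_U; congr (_ *: _ + _).
elim: w => [|x w IHw] /=; first exact: evalE_one.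
by rewrite evalE_mul IHw.
Qed.

Lemma fahomogE g (p : FA F int) : fahomog g p = homog wdeg g p.
Proof. by []. Qed.

Lemma evalE_homog deg (a : nat -> int -> GE) g p :
  (forall i h, ghomog deg h (a i h)) -> fahomog g p -> ghomog deg g (evalE a p).
Proof.
move=> ha; rewrite fahomogE => /homogP <-.
elim/fgl_ind: p => [|k w D IH]; first by rewrite proj0 evalE0 ghomogE homog0.
rewrite projD projZ evalED evalEZ ghomogE; apply: homogD => //.
apply: homogZ; rewrite projU evalEZ.
case: eqP => [<-|_]; last by rewrite scale0r homog0.
apply: homogZ; rewrite evalE_U -ghomogE.
elim: w => [|x w IHw] /=; first by rewrite /wdeg big_nil; exact: gone_homog.
rewrite /wdeg big_cons; exact: ghomog_mul.
Qed.

Lemma TZ_E_ideal deg : is_TZideal (@TZ_E F deg).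
Proof.
split.
- by move=> a _; rewrite evalE0.
- by move=> p q hp hq a ha; rewrite evalED hp // hq // addr0.
- by move=> c p hp a ha; rewrite evalEZ hp // scaler0.
- move=> p h hp; split=> a ha; rewrite evalE_mul hp //.
    exact: gmul0r.
  exact: gmul0l.
- move=> sigma p hs hp a ha; rewrite evalE_subst; apply: hp => i g.
  exact: evalE_homog.
Qed.

End Eval2.

Lemma disP (A B : {fset nat}) :
  reflect (forall x, x \in A -> x \notin B) (A `&` B == fset0).
Proof.
apply: (iffP eqP) => [H x xA|H].
  apply/negP => xB; have : x \in A `&` B by rewrite in_fsetI xA xB.
  by rewrite H.
apply/fsetP => x; rewrite in_fsetI in_fset0.
by case: (boolP (x \in A)) => //= /H /negbTE.
Qed.

Section Transport.
Variable F : fieldType.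
Local Notation GE := (GE F).
Local Notation gmul := (@gmul F).
Local Notation gmono := (@gmono F).
Local Notation gone := (@gone F).
Variable pi : nat -> nat.
Hypothesis pi_inj : injective pi.

Definition pinv (S : {fset nat}) : nat :=
  \sum_(s <- enum_fset S) \sum_(t <- enum_fset S) ((s < t) && (pi t < pi s))%N.
Definition cross (S T : {fset nat}) : nat :=
  \sum_(s <- enum_fset S) \sum_(t <- enum_fset T) ((s < t) && (pi t < pi s))%N.
Definition psgn (S : {fset nat}) : F := (-1) ^+ pinv S.
Definition phi (x : GE) : GE := fglift (fun S => psgn S *: << pi @` S >>) x.

Lemma perm_imfset (S : {fset nat}) :
  perm_eq (enum_fset (pi @` S)) (map pi (enum_fset S)).
Proof.
apply: uniq_perm; first exact: fset_uniq.
  by rewrite (map_inj_uniq pi_inj) fset_uniq.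
move=> x; apply/imfsetP/mapP => [[y yS ->]|[y yS ->]]; by exists y.
Qed.

Lemma dis_im (S T : {fset nat}) :
  ((pi @` S) `&` (pi @` T) == fset0) = (S `&` T == fset0).
Proof.
apply/disP/disP => H x.
  move=> xS; apply/negP => xT.
  by move: (H (pi x)); rewrite !mem_imfset // => /(_ xS); rewrite xT.
move=> /imfsetP [y yS ->]; rewrite mem_imfset //; exact: H.
Qed.

Lemma ginv_im (S T : {fset nat}) :
  ginv (pi @` S) (pi @` T) =
  (\sum_(s <- enum_fset S) \sum_(t <- enum_fset T) (pi t < pi s))%N.
Proof.
rewrite /ginv (perm_big _ (perm_imfset S)) big_map; apply: eq_bigr => s _.
by rewrite (perm_big _ (perm_imfset T)) big_map.
Qed.

Lemma pinvU (S T : {fset nat}) : S `&` T == fset0 ->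
  pinv (S `|` T) = (pinv S + pinv T + cross S T + cross T S)%N.
Proof.
move=> d; rewrite /pinv /cross (perm_big _ (perm_fsetU d)) big_cat /=.
rewrite !(eq_bigr _ (fun s _ => perm_big _ (perm_fsetU d))) /=.
rewrite !(eq_bigr _ (fun s _ => big_cat _ _ _ _ _)) /= !big_split /=.
lia.
Qed.

Lemma ptwise (s t : nat) : s != t ->
  ((t < s) + ((s < t) && (pi t < pi s)) + ((t < s) && (pi s < pi t)) =
   (pi t < pi s) + 2 * ((t < s) && (pi s < pi t)))%N.
Proof.
move=> ne; have ne' : pi s != pi t by apply: contra ne => /eqP /pi_inj ->.
case: (ltngtP s t) => [st|ts|e]; last by rewrite e eqxx in ne.
all: case: (ltngtP (pi s) (pi t)) => [h|h|h]; last by rewrite h eqxx in ne'.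
all: by [].
Qed.

Lemma sign_key (S T : {fset nat}) : S `&` T == fset0 ->
  (-1) ^+ ginv S T * psgn (S `|` T) =
  psgn S * psgn T * (-1) ^+ ginv (pi @` S) (pi @` T).
Proof.
move=> d; rewrite /psgn pinvU // ginv_im -!exprD.
set Y := (\sum_(s <- enum_fset S) \sum_(t <- enum_fset T)
            ((t < s) && (pi s < pi t)))%N.
have key : (ginv S T + cross S T + cross T S =
   (\sum_(s <- enum_fset S) \sum_(t <- enum_fset T) (pi t < pi s)) + 2 * Y)%N.
  have -> : cross T S = Y by rewrite /cross exchange_big.
  rewrite /ginv /cross -!big_split /=.
  rewrite /Y big_distrr /= -big_split /=; rewrite !big_seq; apply: eq_bigr => s sS.
  rewrite -!big_split big_distrr -big_split /= !big_seq; apply: eq_bigr => t tT.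
  apply: ptwise; apply/negP => /eqP est; subst t.
  by move/disP: d => /(_ s sS); rewrite tT.
have -> : (ginv S T + (pinv S + pinv T + cross S T + cross T S) =
   pinv S + pinv T + (ginv S T + cross S T + cross T S))%N.
  lia.
by rewrite key addnA exprD exprM sqrrN !expr1n mulr1.
Qed.

Lemma phiD : {morph phi : x y / x + y}.
Proof. by move=> x y; rewrite /phi raddfD. Qed.
Lemma phi0 : phi 0 = 0.
Proof. by rewrite /phi raddf0. Qed.
Lemma phiZ c x : phi (c *: x) = c *: phi x.
Proof. by rewrite /phi fglZ. Qed.
Lemma phiU S : phi << S >> = psgn S *: << pi @` S >>.
Proof. by rewrite /phi fglU. Qed.

Lemma phi_gmono S T : phi (gmono S T) = gmul (phi << S >>) (phi << T >>).
Proof.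
rewrite !phiU gmulZl gmulZr gmulUU /gmono dis_im.
case: ifP => d; last by rewrite phi0 !scaler0.
rewrite phiZ phiU !scalerA imfsetU; congr (_ *: _).
by rewrite sign_key // mulrC.
Qed.

Lemma phi_mul x y : phi (gmul x y) = gmul (phi x) (phi y).
Proof.
elim/fgl_ind: x => [|k S D IH]; first by rewrite gmul0l phi0 gmul0l.
rewrite gmulDl gmulZl !phiD !phiZ IH gmulDl gmulZl; congr (_ *: _ + _).
clear IH D.
elim/fgl_ind: y => [|k' T D IH]; first by rewrite gmul0r phi0 gmul0r.
rewrite gmulDr gmulZr !phiD !phiZ IH gmulDr gmulZr; congr (_ *: _ + _).
by rewrite gmulUU phi_gmono.
Qed.

Lemma phi_one : phi gone = gone.
Proof.
rewrite /gone phiU imfset0 /psgn /pinv (_ : enum_fset fset0 = [::]) //.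
by rewrite big_nil expr0 scale1r.
Qed.

Lemma phi_evalE (a : nat -> int -> GE) p :
  phi (evalE a p) = evalE (fun i g => phi (a i g)) p.
Proof.
elim/fgl_ind: p => [|k w D IH]; first by rewrite !evalE0 phi0.
rewrite !evalED !evalEZ phiD phiZ IH; congr (_ *: _ + _).
rewrite !evalE_U; elim: w => [|x w IHw] /=; first exact: phi_one.
by rewrite phi_mul IHw.
Qed.

Lemma imfset_inj' (S T : {fset nat}) : pi @` S = pi @` T -> S = T.
Proof.
move=> E; apply/fsetP => x; apply/idP/idP => h.
  have : pi x \in pi @` S by apply/imfsetP; exists x.
  by rewrite E => /imfsetP [y yT /pi_inj ->].
have : pi x \in pi @` T by apply/imfsetP; exists x.
by rewrite -E => /imfsetP [y yT /pi_inj ->].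
Qed.

Lemma coeff_phi (S : {fset nat}) x : coeff (pi @` S) (phi x) = psgn S * coeff S x.
Proof.
elim/fgl_ind: x => [|k T D IH]; first by rewrite phi0 !coeff0 mulr0.
rewrite phiD phiZ phiU !coeffD !coeffZ IH !coeffU mulrDr; congr (_ + _).
have [->|ne] := eqVneq T S; first by rewrite !eqxx /= !mul1r !mulr1 mulrC.
have ne' : (pi @` T == pi @` S) = false.
  by apply/negbTE; apply: contra ne => /eqP /imfset_inj' ->.
by rewrite ne' /= !mulr0n !mulr0.
Qed.

Lemma phi_inj x : phi x = 0 -> x = 0.
Proof.
move=> h; apply/eqP/freeg_eqP => S; rewrite coeff0.
have := coeff_phi S x; rewrite h coeff0 => /esym /eqP.
by rewrite mulf_eq0 /psgn signr_eq0 /= => /eqP.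
Qed.

Lemma gdegS_im (deg : nat -> int) S :
  gdegS deg (pi @` S) = \sum_(s <- enum_fset S) deg (pi s).
Proof. by rewrite /gdegS (perm_big _ (perm_imfset S)) big_map. Qed.

Lemma phi_homog (deg1 deg2 : nat -> int) (c c' : int) g g' x :
  c != 0 -> (forall s, c * deg2 (pi s) = c' * deg1 s) -> c * g' = c' * g ->
  ghomog deg1 g x -> ghomog deg2 g' (phi x).
Proof.
move=> c0 hd hg; rewrite !ghomogE => /homogP <-.
elim/fgl_ind: x => [|k S D IH]; first by rewrite proj0 phi0 homog0.
rewrite projD projZ phiD phiZ; apply: homogD => //; apply: homogZ.
rewrite projU phiZ; case: eqP => [eS|_]; last by rewrite scale0r homog0.
apply: homogZ; rewrite phiU; apply: homogZ; apply: homogU.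
apply: (mulfI c0); rewrite gdegS_im big_distrr /=.
rewrite (eq_bigr _ (fun s _ => hd s)) -big_distrr /= hg -eS.
by [].
Qed.

End Transport.

Section Count.
Definition cnt (P : pred nat) n := count P (iota 0 n).

Lemma cntS (P : pred nat) n : cnt P n.+1 = (cnt P n + P n)%N.
Proof. by rewrite /cnt -addn1 iotaD count_cat /= addn0 add0n. Qed.

Lemma cnt_mono (P : pred nat) m n : (m <= n)%N -> (cnt P m <= cnt P n)%N.
Proof.
move=> /subnKC <-; elim: (n - m)%N => [|k IH]; first by rewrite addn0.
by rewrite addnS cntS (leq_trans IH) // leq_addr.
Qed.

Lemma cnt_hit (P : pred nat) M r : (r < cnt P M)%N -> exists m, P m /\ cnt P m = r.
Proof.
elim: M => [|M IH] //; rewrite cntS.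
case: (ltnP r (cnt P M)) => [h _|h]; first exact: IH.
case PM: (P M) => /= h'; last by exfalso; lia.
by exists M; split => //; lia.
Qed.

Lemma cnt_strict (P : pred nat) i j : (i < j)%N -> P i -> (cnt P i < cnt P j)%N.
Proof.
move=> ij Pi; apply: (@leq_trans (cnt P i.+1)); last exact: cnt_mono.
by rewrite cntS Pi addn1.
Qed.

Lemma cnt_unbounded (P : pred nat) : (forall N, exists i, (N <= i)%N /\ P i) ->
  forall r, exists M, (r < cnt P M)%N.
Proof.
move=> H; elim => [|r [M hM]].
  have [m [_ Pm]] := H 0%N; exists m.+1; rewrite cntS Pm addn1 //.
have [m [Mm Pm]] := H M; exists m.+1; rewrite cntS Pm addn1 ltnS.
exact: leq_trans hM (cnt_mono P Mm).
Qed.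

Lemma cnt_le_list (P : pred nat) (s : seq nat) n : (forall i, P i -> i \in s) ->
  (cnt P n <= size s)%N.
Proof.
move=> H; rewrite /cnt -size_filter; apply: uniq_leq_size.
  by apply: filter_uniq; apply: iota_uniq.
by move=> x; rewrite mem_filter => /andP [/H].
Qed.

Lemma cnt_ge_list (P : pred nat) (s : seq nat) : uniq s -> (forall i, i \in s -> P i) ->
  exists M, (size s <= cnt P M)%N.
Proof.
move=> us H; exists (sumn s).+1; rewrite /cnt -size_filter; apply: uniq_leq_size => //.
move=> x xs; rewrite mem_filter H // mem_iota add0n ltnS /=.
clear us H; elim: s xs => [|y s IH] //=; rewrite inE => /orP [/eqP ->|/IH]; first exact: leq_addr.
by move=> h; apply: leq_trans h (leq_addl _ _).
Qed.

End Count.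

Lemma exists_inj (deg1 deg2 tgt : nat -> int) :
  (forall i j, tgt i = tgt j -> deg1 i = deg1 j) ->
  (forall i, exists v, has_card (fun j => deg1 j = deg1 i) v /\
                       has_card (fun m => deg2 m = tgt i) v) ->
  exists pi : nat -> nat, injective pi /\ forall i, deg2 (pi i) = tgt i.
Proof.
move=> htgt hcard.
pose P1 i := fun j => deg1 j == deg1 i.
pose Q i := fun m => deg2 m == tgt i.
have E i : exists M, (cnt (P1 i) i < cnt (Q i) M)%N.
  have [[k|] [h1 h2]] := hcard i.
    case: h1 => s1 [u1 z1 e1]; case: h2 => s2 [u2 z2 e2].
    have [M hM] := @cnt_ge_list (Q i) s2 u2 (fun m ms => introT eqP ((e2 m).2 ms)).
    exists M; rewrite z2 in hM; apply: leq_trans hM.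
    have := @cnt_le_list (P1 i) s1 i.+1 (fun j pj => (e1 j).1 (eqP pj)).
    by rewrite cntS /P1 eqxx addn1 z1.
  have := @cnt_unbounded (Q i) _ (cnt (P1 i) i).
  apply => N; have [m [Nm hm]] := h2 N; exists m; split => //; exact/eqP.
have W i : exists m, Q i m && (cnt (Q i) m == cnt (P1 i) i).
  have [M hM] := E i; have [m [qm cm]] := cnt_hit hM.
  by exists m; rewrite qm cm eqxx.
exists (fun i => ex_minn (W i)); split; last first.
  by move=> i; case: ex_minnP => m /andP [/eqP -> _].
move=> i j; case: ex_minnP => m /andP [qi ci] _; case: ex_minnP => m' /andP [qj cj] _.
move=> emm; subst m'.
have tij : tgt i = tgt j by rewrite -(eqP qi) (eqP qj).
have dij := htgt _ _ tij.
have eQ : Q i = Q j by rewrite /Q tij.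
have eP : P1 i = P1 j by rewrite /P1 dij.
move: ci cj; rewrite eQ => /eqP -> /eqP; rewrite eP => e.
case: (ltngtP i j) => // h.
  have pj : P1 j i by rewrite /P1 dij.
  by move: (cnt_strict (P:=P1 j) h pj); rewrite e ltnn.
have pj : P1 j j by rewrite /P1.
by move: (cnt_strict (P:=P1 j) h pj); rewrite e ltnn.
Qed.

Section Scale.
Variable F : fieldType.
Local Notation FA := (FA F int).
Local Notation GE := (GE F).
Variable d : int.
Hypothesis d0 : d != 0.

Definition sc (w : word int) : word int := map (fun x => (x.1, d * x.2)) w.
Definition Tm (p : FA) : FA := fglift (fun w => << sc w >>) p.

Lemma TmD : {morph Tm : x y / x + y}.
Proof. by move=> x y; rewrite /Tm raddfD. Qed.
Lemma Tm0 : Tm 0 = 0.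
Proof. by rewrite /Tm raddf0. Qed.
Lemma TmZ c x : Tm (c *: x) = c *: Tm x.
Proof. by rewrite /Tm fglZ. Qed.
Lemma TmU w : Tm << w >> = << sc w >>.
Proof. by rewrite /Tm fglU. Qed.

Lemma PsiPhiE f : Psi d (Phi d f) = Tm f.
Proof.
elim/fgl_ind: f => [|k w D IH].
  by rewrite /Psi /Phi !raddf0 Tm0.
rewrite /Psi /Phi !raddfD /= !fglZ -/(Phi d D) -/(Psi d (Phi d D)) IH.
rewrite TmD TmZ TmU !fglU -map_comp.
by [].
Qed.

Lemma Tm_mul p q : Tm (famul p q) = famul (Tm p) (Tm q).
Proof.
elim/fgl_ind: p => [|k u D IH]; first by rewrite famul0l Tm0 famul0l.
rewrite famulDl famulZl TmD TmZ IH TmD TmZ famulDl famulZl; congr (_ *: _ + _).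
clear IH D.
elim/fgl_ind: q => [|k' v D IH]; first by rewrite famul0r Tm0 famul0r.
rewrite famulDr famulZr TmD TmZ IH TmD TmZ famulDr famulZr; congr (_ *: _ + _).
by rewrite famulUU !TmU famulUU /sc map_cat.
Qed.

Lemma Tm_one : Tm (faone F int) = faone F int.
Proof. by rewrite /faone TmU. Qed.

Definition sig' (sigma : nat -> int -> FA) (i : nat) (m : int) : FA :=
  if (d %| m)%Z then Tm (sigma i (m %/ d)%Z) else favar i m.

Lemma Tm_subst sigma p : Tm (fasubst sigma p) = fasubst (sig' sigma) (Tm p).
Proof.
elim/fgl_ind: p => [|k w D IH]; first by rewrite /fasubst !raddf0 Tm0 raddf0.
rewrite /fasubst raddfD /= fglZ -/(fasubst sigma D) TmD TmZ IH.
rewrite TmD TmZ /fasubst raddfD /= fglZ; congr (_ *: _ + _).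
rewrite fglU TmU fglU; elim: w => [|x w IHw] /=; first exact: Tm_one.
rewrite Tm_mul IHw /sig' dvdz_mulr ?dvdzz // mulKz //.
Qed.

Lemma wdeg_sc w : wdeg (sc w) = d * wdeg w.
Proof. by rewrite /wdeg /sc big_map big_distrr. Qed.

Lemma Tm_homog g p : fahomog g p -> fahomog (d * g) (Tm p).
Proof.
rewrite !fahomogE => /homogP <-.
elim/fgl_ind: p => [|k w D IH]; first by rewrite proj0 Tm0 homog0.
rewrite projD projZ TmD TmZ; apply: homogD => //; apply: homogZ.
rewrite projU TmZ; case: eqP => [e|_]; last by rewrite scale0r homog0.
by apply: homogZ; rewrite TmU; apply: homogU; rewrite wdeg_sc e.
Qed.

Lemma favar_homog i m : fahomog m (favar i m : FA).
Proof. by rewrite fahomogE; apply: homogU; rewrite /wdeg big_seq1. Qed.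

Lemma sig'_graded sigma : graded_endo sigma -> graded_endo (sig' sigma).
Proof.
move=> hs i m; rewrite /sig'; case: ifP => dm; last exact: favar_homog.
have -> : m = d * (m %/ d)%Z by rewrite mulrC divzK.
by rewrite mulKz //; apply: Tm_homog; apply: hs.
Qed.

Lemma evalE_T (b : nat -> int -> GE) f :
  evalE b (Tm f) = evalE (fun i n => b i (d * n)) f.
Proof.
elim/fgl_ind: f => [|k w D IH]; first by rewrite Tm0 !evalE0.
rewrite TmD TmZ !evalED !evalEZ IH TmU !evalE_U; congr (_ *: _ + _).
by elim: w => [|x w IHw] //=; rewrite IHw.
Qed.

Definition alld (w : word int) := all (fun x => (d %| x.2)%Z) w.
Definition dv (w : word int) : word int := map (fun x => (x.1, (x.2 %/ d)%Z)) w.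
Definition g_of (f : FA) : FA := fglift (fun w => if alld w then << dv w >> else 0) f.
Definition r_of (f : FA) : FA := fglift (fun w => if alld w then 0 else << w >>) f.

Lemma decomp f : f = Tm (g_of f) + r_of f.
Proof.
elim/fgl_ind: f => [|k w D IH]; first by rewrite /g_of /r_of !raddf0 Tm0 addr0.
rewrite /g_of /r_of !raddfD /= !fglZ -/(g_of D) -/(r_of D) TmD TmZ.
rewrite addrACA -IH !fglU; congr (_ + _); rewrite -scalerDr; congr (_ *: _).
case: ifP => ad; last by rewrite Tm0 add0r.
rewrite TmU addr0 /sc /dv -map_comp; congr << _ >>.
elim: w ad => [|x w IHw] //= /andP [dx aw]; congr (_ :: _); last exact: IHw aw.
by rewrite mulrC divzK //; case: x dx.
Qed.

End Scale.

Lemma TZgen_ideal F (S : FA F int -> Prop) : is_TZideal (TZgen S).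
Proof.
split.
- by move=> I [h0 _ _ _ _] _.
- by move=> p q hp hq I hI hS; case: (hI) => _ hD _ _ _; apply: hD; [apply: hp|apply: hq].
- by move=> c p hp I hI hS; case: (hI) => _ _ hZ _ _; apply: hZ; apply: hp.
- move=> p h hp; split => I hI hS; case: (hI) => _ _ _ hM _; have := hM p h (hp I hI hS).
    by case.
  by case.
- by move=> sigma p hs hp I hI hS; case: (hI) => _ _ _ _ hF; apply: hF => //; apply: hp.
Qed.

Lemma evalE_ext F (a a' : nat -> int -> GE F) p :
  (forall i g, a i g = a' i g) -> evalE a p = evalE a' p.
Proof.
move=> h; elim/fgl_ind: p => [|k w D IH]; first by rewrite !evalE0.
rewrite !evalED !evalEZ IH !evalE_U; congr (_ *: _ + _).
by elim: w => [|x w IHw] //=; rewrite IHw h.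
Qed.

Lemma r_in F (d : int) (G : FA F int -> Prop) f :
  (forall i m, ~~ (d %| m)%Z -> G (favar i m)) -> TZgen G (r_of d f).
Proof.
move=> hG I hI hS; case: (hI) => h0 hD hZ hM _.
elim/fgl_ind: f => [|k w D IH]; first by rewrite /r_of raddf0.
rewrite /r_of raddfD /= fglZ -/(r_of d D); apply: hD => //; apply: hZ.
rewrite fglU; case: ifP => // ad.
elim: w ad => [|x w IHw] //=; rewrite /alld /= => /negbT; rewrite negb_and.
have -> : (<< x :: w >> : FA F int) = famul (favar x.1 x.2) << w >>.
  by rewrite /favar famulUU; case: x.
case/orP => [nd|nw].
  by case: (hM (favar x.1 x.2) (<< w >> : FA F int) (hS _ (hG x.1 x.2 nd))).
by case: (hM (<< w >> : FA F int) (favar x.1 x.2) (IHw (negbTE nw))).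
Qed.

Lemma TZgen_T F (d : int) (d0 : d != 0) (S G : FA F int -> Prop) :
  (forall s, S s -> TZgen G (Tm d s)) ->
  forall g, TZgen S g -> TZgen G (Tm d g).
Proof.
move=> hS g hg; refine (hg (fun h => TZgen G (Tm d h)) _ hS).
have [h0 hD hZ hM hF] := TZgen_ideal G.
split.
- by rewrite Tm0.
- by move=> p q hp hq; rewrite TmD; apply: hD.
- by move=> c p hp; rewrite TmZ; apply: hZ.
- move=> p h hp; rewrite !Tm_mul; exact: hM.
- move=> sigma p hs hp; rewrite (Tm_subst d0); apply: hF => //.
  exact: sig'_graded.
Qed.

Lemma homog_zero F (deg : nat -> int) (d m : int) (x : GE F) :
  (forall S, (d %| gdegS deg S)%Z) -> ~~ (d %| m)%Z -> ghomog deg m x -> x = 0.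
Proof.
move=> hd nd; rewrite ghomogE => /homogP <-.
elim/fgl_ind: x => [|k S D IH]; first by rewrite proj0.
rewrite projD projZ IH projU; case: eqP => [e|_]; last by rewrite scale0r scaler0 addr0.
by move: (hd S); rewrite e (negbTE nd).
Qed.

Lemma dvd_gdegS (deg : nat -> int) (d : int) :
  (forall i, (d %| deg i)%Z) -> forall S, (d %| gdegS deg S)%Z.
Proof.
move=> h S; rewrite /gdegS; elim: (enum_fset S) => [|x s IH].
  by rewrite big_nil dvdz0.
by rewrite big_cons rpredD.
Qed.

Local Close Scope fset_scope.
Theorem corollary5p6 (F : fieldType) (charF0 : [pchar F] =i pred0)
    (a b c : int) (k : option nat)
    (ha : 0 < a) (hb : 0 < b) (hbc : - b < c) (hca : c < a) :
  let d := gcdz (gcdz a b) c in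
  let a' := (a %/ d)%Z in
  let b' := (b %/ d)%Z in
  let c' := (c %/ d)%Z in
  let d' := gcdz a' b' in
  (match k with Some k0 => is_true (d' - 1 <= k0%:Z) | None => True end) ->
  forall (deg' deg : nat -> int),
    is_grading3 (- b') c' a' None k None deg' ->
    is_grading3 (- b) c a None k None deg ->
  forall S : FA F int -> Prop,
    (forall f, TZ_E deg' f <-> TZgen S f) ->
    forall f : FA F int,
      TZ_E deg f <->
      TZgen (fun g => (exists2 f0, S f0 & g = Psi d (Phi d f0))
                      \/ (exists i m, ~~ (d %| m)%Z /\ g = favar i m)) f.
Proof.
move=> d a' b' c' d' _ deg' deg hg' hg S hS f.
have dpos : d != 0.
  rewrite /d gcdz_eq0 gcdz_eq0; apply/negP => /andP [/andP [/eqP a0 _] _].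
  by rewrite a0 ltxx in ha.
have ea : a = d * a' by rewrite /a' mulrC divzK // /d (dvdz_trans (dvdz_gcdl _ c)) // dvdz_gcdl.
have eb : b = d * b' by rewrite /b' mulrC divzK // /d (dvdz_trans (dvdz_gcdl _ c)) // dvdz_gcdr.
have ec : c = d * c' by rewrite /c' mulrC divzK // /d dvdz_gcdr.
case: hg' => v1' hb' hc' ha'.
case: hg => v1 hb1 hc1 ha1.
have hdiv : forall j, (d %| deg j)%Z.
  move=> j; case: (v1 j) => [->|[->|->]]; rewrite ?eb ?ec ?ea.
  - by rewrite -mulrN dvdz_mulr.
  - by rewrite dvdz_mulr.
  - by rewrite dvdz_mulr.
have [pi1 [pi1_inj hpi1]] : exists pi : nat -> nat, injective pi /\
    forall i, deg (pi i) = d * deg' i.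
  apply: (@exists_inj deg' deg (fun i => d * deg' i)) => [i j /(mulfI dpos) //|i].
  case: (v1' i) => [e|[e|e]]; rewrite e.
  - by exists None; split => //; rewrite mulrN -eb.
  - by exists k; split => //; rewrite -ec.
  - by exists None; split => //; rewrite -ea.
have [pi2 [pi2_inj hpi2]] : exists pi : nat -> nat, injective pi /\
    forall i, deg' (pi i) = (deg i %/ d)%Z.
  apply: (@exists_inj deg deg' (fun i => (deg i %/ d)%Z)) => [i j e|i].
    by rewrite -(divzK (hdiv i)) -(divzK (hdiv j)) e.
  case: (v1 i) => [e|[e|e]]; rewrite e.
  - by exists None; split => //; rewrite eb -mulrN mulKz.
  - by exists k; split => //; rewrite ec mulKz.
  - by exists None; split => //; rewrite ea mulKz.
have hpi2' : forall s, d * deg' (pi2 s) = 1 * deg s.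
  by move=> s; rewrite hpi2 mul1r mulrC divzK.
have hpi1' : forall s, 1 * deg (pi1 s) = d * deg' s.
  by move=> s; rewrite mul1r hpi1.
have K1 : forall f0 : FA F int, TZ_E deg' f0 -> TZ_E deg (Tm d f0).
move=> f0 hf bb hbb; rewrite evalE_T; apply: (phi_inj pi2_inj).
  rewrite (phi_evalE pi2_inj); apply: hf => i n.
  apply: (phi_homog pi2_inj (c := d) (c' := 1) (g := d * n)) => //.
  by rewrite mul1r.
have K2 : forall g0 : FA F int, TZ_E deg (Tm d g0) -> TZ_E deg' g0.
  move=> g0 hg0 aa haa; apply: (phi_inj pi1_inj); rewrite (phi_evalE pi1_inj).
  pose bb i m := if (d %| m)%Z then phi pi1 (aa i (m %/ d)%Z) else 0.
  have hbb : forall i m, ghomog deg m (bb i m).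
    move=> i m; rewrite /bb; case: ifP => dm; last by rewrite ghomogE homog0.
    apply: (phi_homog pi1_inj (c := 1) (c' := d) (g := (m %/ d)%Z)) => //.
    by rewrite mul1r mulrC divzK.
  have := hg0 bb hbb; rewrite evalE_T => <-; apply: evalE_ext => i n.
  by rewrite /bb dvdz_mulr ?dvdzz // mulKz.
set G := (fun g => _ \/ _).
have sound : forall h, TZgen G h -> TZ_E deg h.
  move=> h; apply => //; first exact: TZ_E_ideal.
  move=> g [[f0 Sf0 ->]|[i [m [nd ->]]]].
    rewrite PsiPhiE; apply: K1; apply/hS => I _ hI; exact: hI.
  move=> bb hbb; rewrite evalE_var; apply: (homog_zero (dvd_gdegS hdiv) nd).
  exact: hbb.
split; last exact: sound.
move=> hf.
have hr : TZgen G (r_of d f).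
  apply: r_in => i m nd; right; by exists i, m.
have eT : Tm d (g_of d f) = f - r_of d f by rewrite {2}(@decomp F d f) addrK.
have hT : TZ_E deg (Tm d (g_of d f)).
  have [_ hD hZ _ _] := TZ_E_ideal F deg.
  rewrite eT -scaleN1r; apply: hD => //; apply: hZ; exact: sound.
have hgS : TZgen S (g_of d f) by apply/hS; exact: K2.
have hTG : TZgen G (Tm d (g_of d f)).
  apply: (@TZgen_T F d dpos S G _ _ hgS) => s Ss I _ hI; apply: hI; left.
  by exists s => //; rewrite PsiPhiE.
rewrite (@decomp F d f).
have [_ hD _ _ _] := TZgen_ideal G.
exact: hD.
Qed.
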